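(* Let $(x_n)_{n\in\mathbb{Z}^{\geq 0}}$ be a sequence of real numbers satisfying $x_{n+1} = x_n x_{n-1} - x_{n-2}$ for all $n\geq 2$. If there exists some $N\in\mathbb{Z}^{\geq0}$ such that $$2<|x_N|, \quad |x_N|<|x_{N+1}|, \quad |x_{N+1}|<|x_{N+2}|,$$ then $|x_n|>2$ for all $n\geq N$ and $|x_n|\to\infty$ as $n\to\infty$.
   Context: The initial values $x_0,x_1,x_2$ are arbitrary real numbers, and all subsequent terms are determined by the recursion. *)

(* Defs.v *)
From Stdlib Require Import Reals.
From Coquelicot Require Import Coquelicot.

(* Main.v *)
Require Import Defs.
From Stdlib Require Import Reals.
From Coquelicot Require Import Coquelicot.
From Stdlib Require Import Lra Lia Psatz ZArith.
Open Scope R_scope.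

Theorem lemma1 (x : nat -> R)
  (hrec : forall n : nat, (2 <= n)%nat -> x (S n) = x n * x (n - 1)%nat - x (n - 2)%nat)
  (N : nat)
  (h1 : 2 < Rabs (x N))
  (h2 : Rabs (x N) < Rabs (x (S N)))
  (h3 : Rabs (x (S N)) < Rabs (x (S (S N)))) :
  (forall n : nat, (N <= n)%nat -> 2 < Rabs (x n)) /\
  is_lim_seq (fun n => Rabs (x n)) p_infty.
Proof.
  pose (eps := Rabs (x (S N)) - 2).
  assert (He : 0 < eps) by (unfold eps; lra).
  assert (Inv : forall k : nat,
    2 < Rabs (x (N + k)%nat) /\ Rabs (x (N + k)%nat) < Rabs (x (N + k + 1)%nat) /\
    Rabs (x (N + k + 1)%nat) < Rabs (x (N + k + 2)%nat) /\
    Rabs (x (S N)) <= Rabs (x (N + k + 1)%nat) /\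
    2 * eps * INR k <= Rabs (x (N + k + 2)%nat)).
  { induction k as [|k IH].
    - replace (N + 0 + 2)%nat with (S (S N)) by lia. replace (N + 0 + 1)%nat with (S N) by lia.
      replace (N + 0)%nat with N by lia. unfold eps. simpl INR. repeat split; lra.
    - destruct IH as [Ha [Hb [Hc [Hd Hf]]]].
      replace (N + S k + 2)%nat with (S (N + k + 2)) by lia.
      replace (N + S k + 1)%nat with (N + k + 2)%nat by lia.
      replace (N + S k)%nat with (N + k + 1)%nat by lia.
      remember (Rabs (x (N + k)%nat)) as A eqn:EA.
      remember (Rabs (x (N + k + 1)%nat)) as B eqn:EB.
      remember (Rabs (x (N + k + 2)%nat)) as C eqn:EC.
      assert (HD : C * B - A <= Rabs (x (S (N + k + 2)))).
      { rewrite hrec by lia.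
        replace (N + k + 2 - 1)%nat with (N + k + 1)%nat by lia.
        replace (N + k + 2 - 2)%nat with (N + k)%nat by lia.
        pose proof (Rabs_triang_inv (x (N + k + 2)%nat * x (N + k + 1)%nat) (x (N + k)%nat)).
        rewrite Rabs_mult in H. subst A B C. lra. }
      rewrite S_INR.
      assert (H0 : C + 2 * eps < C * B - A).
      { assert (B - 1 >= 1 + eps) by (unfold eps in *; lra).
        assert (C - 1 >= 1 + eps) by (unfold eps in *; lra).
        assert ((B - 1) * (C - 1) >= (1 + eps) * (1 + eps)) by nra.
        nra. }
      repeat split; try lra. }
  split.
  - intros n Hn. destruct (Inv (n - N)%nat) as [H _].
    replace (N + (n - N))%nat with n in H by lia. exact H.
  - apply is_lim_seq_spec. intros M.
    destruct (archimed (M / (2 * eps))) as [Hup _].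
    pose (K := Z.to_nat (up (M / (2 * eps)))).
    exists (N + 2 + K)%nat. intros n Hn.
    destruct (Inv (n - N - 2)%nat) as [_ [_ [_ [_ Hf]]]].
    replace (N + (n - N - 2) + 2)%nat with n in Hf by lia.
    assert (HK : M / (2 * eps) < INR K).
    { unfold K. destruct (Z_lt_le_dec (up (M / (2 * eps))) 0) as [Hl|Hl].
      - pose proof (pos_INR K).
        apply IZR_lt in Hl. change (IZR 0) with 0 in Hl. unfold K in *. lra.
      - rewrite INR_IZR_INZ, Z2Nat.id by lia. exact Hup. }
    assert (HK2 : INR K <= INR (n - N - 2)) by (apply le_INR; lia).
    assert (M < 2 * eps * INR K).
    { apply (Rmult_lt_compat_l (2 * eps)) in HK; [|lra].
      replace (2 * eps * (M / (2 * eps))) with M in HK by (field; lra). exact HK. }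
    nra.
Qed.
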